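(* $\mathfrak{ss}_e=\mathfrak{ss}_l^{\{0\}}$ and $\mathfrak{ss}_e^\perp=(\mathfrak{ss}_l^{\{0\}})^\perp$.
   Context: Let $\mathfrak S_{cc}$ be the set of all sequences $\mathbf a=\langle a_i:i\in\omega\rangle$ of rational numbers with $a_i\to0$ such that $\sum_i a_i$ is conditionally convergent (converges to a real number, with the positive terms summing to $+\infty$ and the negative terms to $-\infty$). Let $[\omega]^\omega_\omega$ be the set of infinite coinfinite subsets of $\omega$; for such $X$ with increasing enumeration $\langle i_n\rangle$, $\sum_X\mathbf a$ denotes $\sum_n a_{i_n}$. For $A\subseteq\mathbb R$: $\mathfrak{ss}_l^A$ is the least cardinality of $\mathcal X\subseteq[\omega]^\omega_\omega$ such that every $\mathbf a\in\mathfrak S_{cc}$ has some $X\in\mathcal X$ for which $\sum_X\mathbf a$ converges to a limit in $A$; $(\mathfrak{ss}_l^A)^\perp$ is the least cardinality of $\mathcal A\subseteq\mathfrak S_{cc}$ such that no $X\in[\omega]^\omega_\omega$ has $\sum_X\mathbf a$ converging to a limit in $A$ for all $\mathbf a\in\mathcal A$. $\mathfrak{ss}_e$ is the least cardinality of $\mathcal X\subseteq[\omega]^\omega_\omega$ such that every $\mathbf a\in\mathfrak S_{cc}$ has some $X\in\mathcal X$ for which $\sum_X\mathbf a$ converges to the same limit as $\sum\mathbf a$; $\mathfrak{ss}_e^\perp$ is the least cardinality of $\mathcal A\subseteq\mathfrak S_{cc}$ such that no $X\in[\omega]^\omega_\omega$ has $\sum_X\mathbf a=\sum\mathbf a$ for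 all $\mathbf a\in\mathcal A$. *)

(* Defs.v *)
From HB Require Import structures.
From mathcomp Require Import all_boot all_order all_algebra.
From mathcomp Require Import all_classical all_reals all_analysis.
From mathcomp Require Import Rstruct Rstruct_topology.
Set Implicit Arguments. Unset Strict Implicit. Unset Printing Implicit Defensive.
Import Order.TTheory GRing.Theory Num.Theory.
Local Open Scope classical_set_scope.
Local Open Scope ring_scope.


Definition rseq (a : nat -> rat) : nat -> Rdefinitions.R := fun n => ratr (a n).

Definition Scc : set (nat -> rat) := [set a |
  (rseq a @ \oo --> (0 : Rdefinitions.R)) /\
  (exists l : Rdefinitions.R, series (rseq a) @ \oo --> l) /\
  (series (fun n => Num.max (rseq a n) 0) @ \oo --> +oo) /\
  (series (fun n => Num.min (rseq a n) 0) @ \oo --> -oo)].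

Definition infcoinf : set (set nat) :=
  [set X | ~ finite_set X /\ ~ finite_set (~` X)].

Definition subsum_to (X : set nat) (a : nat -> rat) (l : Rdefinitions.R) : Prop :=
  exists e : nat -> nat, (forall n, (e n < e n.+1)%N) /\ range e = X /\
    series (fun n => rseq a (e n)) @ \oo --> l.

Definition ssl_family (A : set Rdefinitions.R) (XX : set (set nat)) : Prop :=
  XX `<=` infcoinf /\
  forall a, Scc a -> exists2 X, XX X & exists2 l, A l & subsum_to X a l.

Definition ssl_perp_family (A : set Rdefinitions.R) (AA : set (nat -> rat)) : Prop :=
  AA `<=` Scc /\
  ~ exists2 X, infcoinf X & forall a, AA a -> exists2 l, A l & subsum_to X a l.

Definition sse_family (XX : set (set nat)) : Prop :=
  XX `<=` infcoinf /\
  forall a, Scc a -> exists2 X, XX X &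
    exists l : Rdefinitions.R, series (rseq a) @ \oo --> l /\ subsum_to X a l.

Definition sse_perp_family (AA : set (nat -> rat)) : Prop :=
  AA `<=` Scc /\
  ~ exists2 X, infcoinf X & forall a, AA a ->
    exists l : Rdefinitions.R, series (rseq a) @ \oo --> l /\ subsum_to X a l.

(* "the least cardinality of a family satisfying P equals the least cardinality
   of a family satisfying Q" (both minima taken over the cardinals of witness
   families; with AC this is equivalent to the following, and it also covers the
   case where one side has no witness at all). *)
Definition min_card_eq {T U : Type} (P : set T -> Prop) (Q : set U -> Prop) : Prop :=
  (forall A, P A -> exists B, Q B /\ (B #<= A)%card) /\
  (forall B, Q B -> exists A, P A /\ (A #<= B)%card).

(* Main.v *)
Require Import Defs.
From mathcomp Require Import all_boot all_order all_algebra.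
From mathcomp Require Import all_classical all_reals all_analysis.
From mathcomp Require Import Rstruct Rstruct_topology.
Local Open Scope classical_set_scope.

Import Order.TTheory GRing.Theory Num.Theory.
Set Implicit Arguments.

Definition incr (e : nat -> nat) := forall n, (e n < e n.+1)%N.

Lemma incr_lt e : incr e -> forall i j, (e i < e j)%N = (i < j)%N.
Proof.
move=> ei i j.
have hm := leq_mono (homo_ltn (fun y x z => @ltn_trans y x z) ei).
by rewrite !ltnNge hm.
Qed.

Lemma incr_ge e : incr e -> forall n, (n <= e n)%N.
Proof.
move=> ei; elim=> [|n IH] //; exact: leq_ltn_trans IH (ei n).
Qed.

Fixpoint enum_from (g : nat -> nat) (n : nat) : nat :=
  if n is m.+1 then g (enum_from g m).+1 else g 0%N.

Lemma enum_of (Y : set nat) : ~ finite_set Y ->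
  exists e, incr e /\ range e = Y.
Proof.
move=> Yinf.
have unb : forall N, exists y, Y y /\ (N <= y)%N.
  move=> N; apply: contrapT => H; apply: Yinf.
  have sub : Y `<=` `I_N.
    move=> y Yy /=; rewrite ltnNge; apply/negP => Ny; apply: H; by exists y.
  exact: (sub_finite_set sub (finite_II N)).
have mn : forall N, exists y, (Y y /\ (N <= y)%N) /\
    forall z, Y z -> (N <= z)%N -> (y <= z)%N.
  move=> N.
  have ex : exists y, `[< Y y /\ (N <= y)%N >].
    by case: (unb N) => y h; exists y; apply/asboolP.
  case: (ex_minnP ex) => y /asboolP hy hmin.
  exists y; split => // z Yz Nz; apply: hmin; exact/asboolP.
have [g hg] := choice mn.
exists (enum_from g).
have ei : incr (enum_from g).
  move=> n /=; have [[_ h] _] := hg (enum_from g n).+1; exact: h.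
split => //.
apply/seteqP; split.
  move=> x [n _ <-]; case: n => [|n] /=; [by case: (hg 0%N) => [[]] | by case: (hg (enum_from g n).+1) => [[]]].
move=> x Yx.
have ex : exists n, (x <= enum_from g n)%N by exists x; exact: incr_ge.
case: (ex_minnP ex) => n hn hmin; exists n => //.
apply/eqP; rewrite eqn_leq hn andbT.
case: n hn hmin => [|m] hn hmin /=.
  by have [_ h] := hg 0%N; exact: h.
have [_ h] := hg (enum_from g m).+1; apply: h => //.
rewrite ltnNge; apply/negP => /hmin; by rewrite ltnn.
Qed.

Section Decomp.
Variable u : nat -> Rdefinitions.R.

Lemma step e f N i j : incr e ->
  (forall k, (e k < N)%N = (k < i)%N) -> (forall k, (f k < N)%N = (k < j)%N) ->
  (exists k0, e k0 = N) -> (forall k, f k <> N) ->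
  series u N = (series (u \o e) i + series (u \o f) j)%R ->
  (forall k, (e k < N.+1)%N = (k < i.+1)%N) /\ (forall k, (f k < N.+1)%N = (k < j)%N) /\
  series u N.+1 = (series (u \o e) i.+1 + series (u \o f) j)%R.
Proof.
move=> ei He Hf [k0 ek0] fN HS.
have k0i : k0 = i.
  apply/eqP; rewrite eqn_leq; apply/andP; split.
    rewrite leqNgt; apply/negP => ik0.
    have := He i; rewrite -ek0 incr_lt // ik0 ltnn; done.
  by rewrite leqNgt -He ek0 ltnn.
subst k0.
split; [|split].
- move=> k; rewrite [in RHS]ltnS [in RHS]leq_eqVlt ltnS leq_eqVlt He; congr orb.
  rewrite -ek0; apply/eqP/eqP => [|->//]; by move/incn_inj; apply; apply: leq_mono; apply: homo_ltn ei; exact: ltn_trans.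
- move=> k; rewrite ltnS leq_eqVlt Hf.
  by have -> : (f k == N) = false by apply/negP => /eqP /fN.
- by rewrite !seriesSr HS /= ek0 addrAC.
Qed.

Lemma decomp e f X : incr e -> range e = X -> incr f -> range f = ~` X ->
  forall N, exists ij : nat * nat,
   (forall k, (e k < N)%N = (k < ij.1)%N) /\ (forall k, (f k < N)%N = (k < ij.2)%N) /\
   series u N = (series (u \o e) ij.1 + series (u \o f) ij.2)%R.
Proof.
move=> ei er fi fr; elim=> [|N [[i j] /= [He [Hf HS]]]].
  exists (0, 0)%N => /=; split => // ; split => //.
  by rewrite /series /= !big_geq // addr0.
have [NX|NX] := pselect (X N).
- exists (i.+1, j) => /=; apply: step => //.
    by rewrite -er in NX; case: NX => k _ <-; exists k.
  move=> k fk; have : (~` X) N by rewrite -fr; exists k.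
  by [].
- exists (i, j.+1) => /=.
  have h1 : exists k0, f k0 = N.
    by have : (~` X) N by []; rewrite -fr; case=> k _ <-; exists k.
  have h2 : forall k, e k <> N by move=> k ek; apply: NX; rewrite -er; exists k.
  have h3 : series u N = (series (u \o f) j + series (u \o e) i)%R by rewrite addrC.
  have [H1 [H2 H3]] := @step f e N j i fi Hf He h1 h2 h3.
  split => //; split => //; by rewrite H3 addrC.
Qed.

Lemma lt_eq_nat a b : (forall k, (k < a)%N = (k < b)%N) -> a = b.
Proof.
move=> H; apply/eqP; rewrite eqn_leq; apply/andP; split; rewrite leqNgt; apply/negP => h.
  by have := H b; rewrite h ltnn.
by have := H a; rewrite h ltnn.
Qed.

Lemma compl_cvg e f X (L l1 : Rdefinitions.R) : incr e -> range e = X -> incr f -> range f = ~` X ->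
  series u @ \oo --> L -> series (u \o e) @ \oo --> l1 ->
  series (u \o f) @ \oo --> (L - l1)%R.
Proof.
move=> ei er fi fr hL hl.
have [ij hij] := choice (decomp ei er fi fr).
have q2 : forall m, (ij (f m)).2 = m.
  move=> m; apply: esym; apply: lt_eq_nat => k.
  by have [_ [H _]] := hij (f m); rewrite -H incr_lt.
have -> : series (u \o f) = (fun m => series u (f m) - series (u \o e) (ij (f m)).1)%R.
  apply: funext => m; have [_ [_ H]] := hij (f m); by rewrite H q2 addrAC subrr add0r.
have h1 : (fun m => series u (f m)) @ \oo --> L.
  apply: (cvg_comp f (series u) _ hL).
  apply/cvgnyPge => A; apply: filterS (nbhs_infty_ge A) => x Ax.
  exact: leq_trans Ax (incr_ge fi x).
have h2 : (fun m => series (u \o e) (ij (f m)).1) @ \oo --> l1.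
  apply: (cvg_comp (fun m => (ij (f m)).1) (series (u \o e)) _ hl).
  apply/cvgnyPge => A; apply: filterS (nbhs_infty_gt (e A)) => m hm.
  have [H _] := hij (f m); apply: ltnW; rewrite -H.
  exact: leq_trans hm (incr_ge fi m).
exact: (@cvgB Rdefinitions.R Rdefinitions.R^o _ _ _ _ _ _ _ h1 h2).
Qed.

End Decomp.

Lemma infcoinf_C X : infcoinf X -> infcoinf (~` X).
Proof. by case=> h1 h2; split => //; rewrite setCK. Qed.

Lemma compl_sub (a : nat -> rat) X (L l1 : Rdefinitions.R) : infcoinf X ->
  series (rseq a) @ \oo --> L -> subsum_to X a l1 -> subsum_to (~` X) a (L - l1)%R.
Proof.
case=> _ Xc hL [e [ei [er ec]]].
have [f [fi fr]] := enum_of Xc.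
exists f; split => //; split => //.
exact: (compl_cvg ei er fi fr hL ec).
Qed.

Theorem mainTheorem8 :
  min_card_eq sse_family (ssl_family [set (0 : Rdefinitions.R)%R]) /\
  min_card_eq sse_perp_family (ssl_perp_family [set (0 : Rdefinitions.R)%R]).
Proof.
split; split.
- move=> A [Asub HA]; exists (setC @` A); split; last exact: card_image_le.
  split.
    by move=> _ [X AX <-]; apply: infcoinf_C; apply: Asub.
  move=> a Sa; have [X AX [l [hl hs]]] := HA a Sa.
  exists (~` X); first by exists X.
  exists 0%R => //.
  by have := compl_sub (Asub _ AX) hl hs; rewrite subrr.
- move=> B [Bsub HB]; exists (setC @` B); split; last exact: card_image_le.
  split.
    by move=> _ [X AX <-]; apply: infcoinf_C; apply: Bsub.
  move=> a Sa; have [X BX [l l0 hs]] := HB a Sa.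
  have [_ [[L hL] _]] := Sa.
  exists (~` X); first by exists X.
  exists L; split => //.
  by have := compl_sub (Bsub _ BX) hL hs; rewrite l0 subr0.
- move=> A [Asub HA]; exists A; split; last exact: card_lexx.
  split => // -[X Xi HX]; apply: HA.
  exists (~` X); first exact: infcoinf_C.
  move=> a Aa; have [_ [[L hL] _]] := Asub _ Aa.
  have [l l0 hs] := HX a Aa.
  exists L; split => //.
  by have := compl_sub Xi hL hs; rewrite l0 subr0.
- move=> B [Bsub HB]; exists B; split; last exact: card_lexx.
  split => // -[X Xi HX]; apply: HB.
  exists (~` X); first exact: infcoinf_C.
  move=> a Ba; have [l [hl hs]] := HX a Ba.
  exists 0%R => //.
  by have := compl_sub Xi hl hs; rewrite subrr.
Qed.
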